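(* Let $\beta\in(0,1/2^{|S|})$ and $\varepsilon\in\left(0,\frac{\beta(1-\beta)}{L\,|S|^{4}}\right)$. For every irreducible transition matrix $q$ on $S$ and every transition matrix $\widehat q$ on $S$ that is $(\varepsilon,\beta)$-close to $q$: (1) $\widehat q$ is irreducible; (2) its stationary distribution $\widehat\mu$ satisfies $\left|1-\frac{\widehat\mu_s}{\mu_s}\right|\le 18\beta L$ for every $s\in S$.
   Context: $S$ is a finite set with $|S|\ge 2$. A transition matrix on $S$ is $q=(q(t\mid s))_{s,t\in S}$ with nonnegative entries and $\sum_{t}q(t\mid s)=1$ for each $s$; for $D\subseteq S$ write $q(D\mid s)=\sum_{t\in D}q(t\mid s)$, and for $C\subseteq S$ write $\overline C=S\setminus C$. For irreducible $q$, $\mu=(\mu_s)_{s\in S}$ denotes its stationary distribution. Define $\zeta_q=\min_{\emptyset\neq C\subsetneq S}\sum_{s\in C}\mu_s\,q(\overline C\mid s)$. Given $\varepsilon,\beta>0$, a transition matrix $\widehat q$ is $(\varepsilon,\beta)$-close to $q$ if for all $s,t\in S$, $\left|1-\frac{\widehat q(t\mid s)}{q(t\mid s)}\right|\le\beta$ whenever (a) $\mu_s q(t\mid s)\ge\varepsilon\zeta_q$ or (b) $\mu_s\widehat q(t\mid s)\ge\varepsilon\zeta_q$ (in case (b) this requires in particular $q(t\mid s)>0$). Finally $L=\sum_{n=1}^{|S|-1}\binom{|S|}{n}n^{|S|}$. *)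

(* Defs.v *)
From mathcomp Require Import all_boot all_order all_algebra.
Set Implicit Arguments. Unset Strict Implicit. Unset Printing Implicit Defensive.
Import Order.TTheory GRing.Theory Num.Theory.
Local Open Scope ring_scope.

Section Defs.
Variables (R : realFieldType) (S : finType).

(* A transition matrix: q s t stands for q(t | s). *)
Definition transition (q : S -> S -> R) : Prop :=
  (forall s t, 0 <= q s t) /\ (forall s, \sum_(t : S) q s t = 1).

Definition trans_set (q : S -> S -> R) (D : {set S}) (s : S) : R :=
  \sum_(t in D) q s t.

Definition irreducible (q : S -> S -> R) : Prop :=
  forall s t : S, connect (fun x y => 0 < q x y) s t.

Definition stationary (q : S -> S -> R) (mu : S -> R) : Prop :=
  (forall s, 0 <= mu s) /\ (\sum_(s : S) mu s = 1) /\
  (forall t, \sum_(s : S) mu s * q s t = mu t).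

Definition flow (q : S -> S -> R) (mu : S -> R) (C : {set S}) : R :=
  \sum_(s in C) mu s * trans_set q (~: C) s.

(* zeta_q : minimum over nonempty proper subsets C. The seed 1 of the fold
   is harmless, since every flow value is <= 1 for a probability vector mu
   and a stochastic q. *)
Definition zeta (q : S -> S -> R) (mu : S -> R) : R :=
  \big[Num.min/1]_(C : {set S} | (C != set0) && (C != setT)) flow q mu C.

Definition close (eps beta : R) (q : S -> S -> R) (mu : S -> R)
    (qh : S -> S -> R) : Prop :=
  forall s t : S,
    (eps * zeta q mu <= mu s * q s t ->
       `|1 - qh s t / q s t| <= beta) /\
    (eps * zeta q mu <= mu s * qh s t ->
       0 < q s t /\ `|1 - qh s t / q s t| <= beta).

End Defs.

Definition Lconst (S : finType) : nat :=
  \sum_(1 <= n < #|S|) 'C(#|S|, n) * n ^ #|S|.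

(* Main.v *)
Require Import Defs.
From mathcomp Require Import all_boot all_order all_algebra.
From mathcomp Require Import ring lra zify.
Import Order.TTheory GRing.Theory Num.Theory.
Set Implicit Arguments. Unset Strict Implicit.
Local Open Scope ring_scope.


Definition cross (R : realFieldType) (S : finType) (q : S -> S -> R) (nu : S -> R)
  (A B : {set S}) : R := \sum_(x in A) \sum_(y in B) nu x * q x y.
Arguments cross {R S}.

Lemma sum_splitC {R : realFieldType} {S : finType} (C : {set S}) (F : S -> R) :
  \sum_y F y = \sum_(y in C) F y + \sum_(y in ~:C) F y.
Proof.
rewrite (bigID (fun y => y \in C)) /=; congr (_ + _).
by apply: eq_bigl => y; rewrite in_setC.
Qed.

Lemma balance (R : realFieldType) (S : finType) (q : S -> S -> R) (nu : S -> R)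
  (hrow : forall s, \sum_t q s t = 1)
  (hst : forall t, \sum_s nu s * q s t = nu t) (C : {set S}) :
  cross q nu C (~:C) = cross q nu (~:C) C.
Proof.
rewrite /cross.
have E1 : \sum_(y in C) nu y = \sum_x \sum_(y in C) nu x * q x y.
  by rewrite exchange_big; apply: eq_bigr => y _; rewrite hst.
have E2 : \sum_(y in C) nu y = \sum_(x in C) \sum_y nu x * q x y.
  by apply: eq_bigr => x _; rewrite -mulr_sumr hrow mulr1.
rewrite (sum_splitC C) in E1.
have E3 : \sum_(x in C) \sum_y nu x * q x y =
   \sum_(x in C) \sum_(y in C) nu x * q x y + \sum_(x in C) \sum_(y in ~:C) nu x * q x y.
  by rewrite -big_split; apply: eq_bigr => x _; rewrite (sum_splitC C).
lra.
Qed.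

Lemma cross_edge (S : finType) (e : rel S) (C : {set S}) (s t : S) :
  connect e s t -> s \in C -> t \notin C ->
  exists x y, [/\ x \in C, y \notin C & e x y].
Proof.
move/connectP=> [p hp ->] {t}.
elim: p s hp => [|y p IH] s /=; first by move=> _ hs; rewrite hs.
move=> /andP [exy hp] hs hl.
case: (boolP (y \in C)) => hy. by apply: (IH y hp hy hl).
by exists s, y.
Qed.

Lemma sum_pos_ex (R : realFieldType) (I : finType) (A : pred I) (f : I -> R) :
  0 < \sum_(i in A) f i -> exists2 i, i \in A & 0 < f i.
Proof.
move=> h.
case: (boolP [exists i in A, 0 < f i]) => [/exists_inP [i hi hf]|/exists_inP hn].
  by exists i.
exfalso.
have : \sum_(i in A) f i <= \sum_(i in A) 0.
  apply: ler_sum => i hi; rewrite leNgt; apply/negP => hf; apply: hn; by exists i.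
rewrite big1_eq => h2; lra.
Qed.

Lemma sum_pos (R : realFieldType) (I : finType) (A : pred I) (f : I -> R) (i0 : I) :
  (forall i, i \in A -> 0 <= f i) -> i0 \in A -> 0 < f i0 -> 0 < \sum_(i in A) f i.
Proof.
move=> h0 hi0 hf.
rewrite (bigD1 i0) //=.
have : 0 <= \sum_(i in A | i != i0) f i by apply: sumr_ge0 => i /andP [hi _]; exact: h0.
lra.
Qed.

Lemma cross_bound (R : realFieldType) (S : finType) (A B : {set S}) (f g : S -> S -> R) (k : R) :
  0 <= k -> (forall x y, x \in A -> y \in B -> f x y <= g x y + k) ->
  \sum_(x in A) \sum_(y in B) f x y <=
  \sum_(x in A) \sum_(y in B) g x y + k * (#|S|%:R ^+ 2).
Proof.
move=> hk h.
apply: (@le_trans _ _ (\sum_(x in A) \sum_(y in B) (g x y + k))).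
  by apply: ler_sum => x hx; apply: ler_sum => y hy; exact: h.
rewrite (eq_bigr (fun x => \sum_(y in B) g x y + k *+ #|B|)); last first.
  by move=> x _; rewrite big_split /= sumr_const.
rewrite big_split /= sumr_const lerD2l -mulrnA -[k *+ _]mulr_natr; apply: (ler_wpM2l hk).
rewrite -natrX ler_nat expnS expn1 mulnC.
by apply: leq_mul; apply: max_card.
Qed.

Lemma pow_bound (R : realFieldType) (x : R) (k : nat) : 0 <= x -> x <= 1 ->
  (1 + x) ^+ k <= 1 + x * (k * 2 ^ k)%:R.
Proof.
move=> hx0 hx1; elim: k => [|k IH]; first by rewrite expr0 mul0n mulr0 addr0.
set A : R := (k * 2 ^ k)%:R.
have hA : 0 <= A by rewrite /A ler0n.
have hB : 1 + 2 * A <= ((k.+1 * 2 ^ k.+1)%:R : R).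
  have -> : 1 + 2 * A = (1 + 2 * (k * 2 ^ k))%:R by rewrite natrD natrM.
  rewrite ler_nat expnS.
  have : (0 < 2 ^ k)%N by rewrite expn_gt0.
  lia.
rewrite exprS.
have h1 : (1 + x) * (1 + x) ^+ k <= (1 + x) * (1 + x * A).
  by apply: ler_wpM2l => //; lra.
have h2 : x * x * A <= x * A.
  by apply: ler_wpM2r => //; rewrite -[X in _ <= X]mulr1; apply: ler_wpM2l.
have h3 : x * (1 + 2 * A) <= x * (k.+1 * 2 ^ k.+1)%:R by apply: ler_wpM2l.
nra.
Qed.


Lemma Lconst_bounds (N : nat) : (2 <= N)%N ->
  (1 <= \sum_(1 <= k < N) 'C(N, k) * k ^ N)%N /\
  (4 * (N.-1 * 2 ^ N.-1) <= 18 * \sum_(1 <= k < N) 'C(N, k) * k ^ N)%N.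
Proof.
case: N => [|[|m]] // _.
rewrite big_nat_recr //=.
set T := \sum_(1 <= i < m.+1) _.
have hc : (0 < 'C(m.+2, m.+1))%N by rewrite bin_gt0.
have hp : (2 ^ m.+1 <= 4 * (m.+1) ^ m.+1)%N.
  case: m {T hc} => [|m] //.
  have : (2 ^ m.+2 <= m.+2 ^ m.+2)%N by rewrite leq_exp2r.
  lia.
have hP : (0 < (m.+1) ^ m.+1)%N by rewrite expn_gt0.
rewrite expnS.
set P := (m.+1 ^ m.+1)%N in hp hP *.
set Q := (2 ^ m.+1)%N in hp *.
set C := 'C(m.+2, m.+1) in hc *.
have h1 : (m.+1 * P <= C * (m.+1 * P))%N by rewrite leq_pmull.
have h2 : (m.+1 * Q <= 4 * (m.+1 * P))%N by rewrite mulnCA leq_mul2l hp orbT.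
have h3 : (0 < m.+1 * P)%N by rewrite muln_gt0.
clearbody T C P Q.
move: (m.+1 * P)%N (m.+1 * Q)%N h1 h2 h3 => X Y h1 h2 h3.
move: (C * X)%N h1 => Z h1.
lia.
Qed.

Lemma numeric1 (R : realFieldType) (beta del : R) : 0 < beta -> 4 * beta <= 1 ->
  0 <= del -> 4 * del <= beta ->
  1 + beta + del <= (1 + 4 * beta) * ((1 - beta) * (1 - del)).
Proof. move=> h1 h2 h3 h4. have h5 : (1 + 4 * beta) * (1 - beta) >= 1 + 2 * beta by nra.
have h6 : 0 <= 1 - del by lra.
have := ler_wpM2r h6 h5. nra. Qed.


Lemma sum_pos_ex_all (R : realFieldType) (I : finType) (f : I -> R) :
  0 < \sum_i f i -> exists i, 0 < f i.
Proof.
move=> h.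
case: (boolP [exists i, 0 < f i]) => [/existsP [i hf]|/existsP hn]; first by exists i.
exfalso.
have : \sum_i f i <= \sum_(i : I) 0.
  apply: ler_sum => i _; rewrite leNgt; apply/negP => hf; apply: hn; by exists i.
rewrite big1_eq => h2; lra.
Qed.

Unset Implicit Arguments.
Set Strict Implicit.

Theorem theorem1 (R : realFieldType) (S : finType) (hS : (1 < #|S|)%N)
  (beta eps : R)
  (hbeta0 : 0 < beta) (hbeta1 : beta < 1 / 2 ^+ #|S|)
  (heps0 : 0 < eps)
  (heps1 : eps < beta * (1 - beta) / ((Lconst S)%:R * (#|S|%:R) ^+ 4))
  (q : S -> S -> R) (mu : S -> R)
  (hq : transition q) (hirr : irreducible q) (hmu : stationary q mu)
  (qh : S -> S -> R) (hqh : transition qh)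
  (hclose : close eps beta q mu qh) :
  irreducible qh /\
  (forall muh : S -> R, stationary qh muh ->
     forall s : S, `|1 - muh s / mu s| <= 18 * beta * (Lconst S)%:R).
Proof.
have [hq0 hq1] := hq. have [hqh0 hqh1] := hqh. have [hmu0 [hmu1 hmust]] := hmu.
have [hL1 hL2] := @Lconst_bounds #|S| hS.
rewrite -/(Lconst S) in hL1 hL2.
have hb4 : 4 * beta <= 1.
  have h2n : (2 ^ 2 <= 2 ^ #|S|)%N by rewrite leq_pexp2l.
  have h2nR : 4 <= (2 : R) ^+ #|S| by rewrite -natrX (ler_nat R 4).
  have hp : 0 < (2 : R) ^+ #|S| by rewrite exprn_gt0.
  move: hbeta1; rewrite ltr_pdivlMr // => h.
  have := ler_wpM2l (ltW hbeta0) h2nR. lra.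
set N : R := #|S|%:R.
have hN : 2 <= N by rewrite /N (ler_nat R 2).
have hLR : 1 <= (Lconst S)%:R :> R by rewrite (ler_nat R 1).
set del := N ^+ 2 * eps.
have hdel0 : 0 <= del by rewrite /del mulr_ge0 ?exprn_ge0 // ?ltW //; lra.
have hdel : 4 * del <= beta.
  have hp : 0 < (Lconst S)%:R * N ^+ 4 by apply: mulr_gt0; [lra| rewrite exprn_gt0 //; lra].
  move: heps1; rewrite ltr_pdivlMr // => h.
  have e4 : N ^+ 4 = N ^+ 2 * N ^+ 2 by rewrite -exprD.
  rewrite e4 in h.
  have hN2 : 4 <= N ^+ 2 by rewrite expr2; nra.
  have h1 : del * 4 <= del * N ^+ 2 by apply: ler_wpM2l.
  have h2 : del * N ^+ 2 * 1 <= del * N ^+ 2 * (Lconst S)%:R.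
    by apply: ler_wpM2l => //; apply: mulr_ge0 => //; apply: exprn_ge0; lra.
  have h3 : eps * ((Lconst S)%:R * (N ^+ 2 * N ^+ 2)) = del * N ^+ 2 * (Lconst S)%:R.
    by rewrite /del; ring.
  have h4 : beta * (1 - beta) <= beta by nra.
  lra.
have mupos : forall s, 0 < mu s.
  move=> z0; rewrite lt_def hmu0 andbT; apply/eqP => hz.
  set P := [set x | 0 < mu x].
  have [x0 hx0] : exists x0, 0 < mu x0 by apply: sum_pos_ex_all; rewrite hmu1; lra.
  have hx0P : x0 \in P by rewrite inE.
  have hz0P : z0 \notin P by rewrite inE hz ltxx.
  have [x [y [hx hy hxy]]] := cross_edge (hirr x0 z0) hx0P hz0P.
  have bal := balance hq1 hmust P.
  have hr : cross q mu (~:P) P = 0.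
    rewrite /cross big1 // => x1; rewrite in_setC inE => hx1.
    have -> : mu x1 = 0 by apply/eqP; rewrite eq_le hmu0 andbT leNgt.
    by rewrite big1 // => y1 _; rewrite mul0r.
  have hl : 0 < cross q mu P (~:P).
    apply: (sum_pos _ hx).
      by move=> i _; apply: sumr_ge0 => j _; apply: mulr_ge0.
    apply: (sum_pos (i0 := y)).
      by move=> j _; apply: mulr_ge0.
      by rewrite in_setC.
    by apply: mulr_gt0 => //; move: hx; rewrite inE.
  by move: hl; rewrite bal hr ltxx.
have Fpos : forall C : {set S}, C != set0 -> C != setT -> 0 < cross q mu C (~:C).
  move=> C h0 h1.
  have [s hs] := set0Pn C h0.
  have : ~~ (setT \subset C) by rewrite subTset.
  case/subsetPn => t _ ht.
  have [x [y [hx hy hxy]]] := cross_edge (hirr s t) hs ht.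
  apply: (sum_pos _ hx).
    by move=> i _; apply: sumr_ge0 => j _; apply: mulr_ge0.
  apply: (sum_pos (i0 := y)).
    by move=> j _; apply: mulr_ge0.
    by rewrite in_setC.
  by apply: mulr_gt0.
have flowE : forall C, flow q mu C = cross q mu C (~:C).
  by move=> C; rewrite /flow /cross; apply: eq_bigr => x _; rewrite /trans_set mulr_sumr.
have zle : forall C : {set S}, C != set0 -> C != setT -> zeta q mu <= cross q mu C (~:C).
  move=> C h0 h1; rewrite -flowE /zeta.
  by apply: (bigmin_le_cond _ (j := C)); rewrite h0 h1.
have zpos : 0 < zeta q mu.
  rewrite /zeta; apply: lt_bigmin => // C /andP [h0 h1]; rewrite flowE; exact: Fpos.
set z := zeta q mu in zle zpos hclose.
have hez : 0 < eps * z by apply: mulr_gt0.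
have outb : forall C : {set S}, C != set0 -> C != setT ->
    (1 - beta) * (1 - del) * cross q mu C (~:C) <= cross qh mu C (~:C).
  move=> C h0 h1.
  have hk : 0 <= (1 - beta) * (eps * z) by apply: mulr_ge0; lra.
  have := @cross_bound _ _ C (~:C) (fun x y => (1 - beta) * (mu x * q x y))
     (fun x y => mu x * qh x y) _ hk.
  have H : (forall x y, x \in C -> y \in ~:C ->
      (1 - beta) * (mu x * q x y) <= mu x * qh x y + (1 - beta) * (eps * z)).
    move=> x y _ _.
    case: (lerP (eps * z) (mu x * q x y)) => hc.
    - have [h _] := hclose x y. have hb := h hc.
      have qpos : 0 < q x y.
        rewrite lt_def hq0 andbT; apply/eqP => h0'; move: hc; rewrite h0' mulr0; lra.
      set w := qh x y / q x y in hb.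
      have hw : qh x y = w * q x y by rewrite /w divfK // gt_eqF.
      move: hb; rewrite ler_norml => /andP [hb1 hb2].
      rewrite hw.
      have hwp : 0 <= w - (1 - beta) by lra.
      have := mulr_ge0 (mulr_ge0 (hmu0 x) (hq0 x y)) hwp.
      have : 0 <= (1 - beta) * (eps * z) by apply: mulr_ge0; lra.
      nra.
    - have hb1 : 0 <= 1 - beta by lra.
      have := ler_wpM2l hb1 (ltW hc).
      have := mulr_ge0 (hmu0 x) (hqh0 x y). lra.
  have e : \sum_(x in C) \sum_(y in ~:C) (1 - beta) * (mu x * q x y) = (1 - beta) * cross q mu C (~:C).
    by rewrite /cross mulr_sumr; apply: eq_bigr => x _; rewrite mulr_sumr.
  move=> /(_ H); rewrite e.
  rewrite -[\sum_(x in C) \sum_(y in ~:C) mu x * qh x y]/(cross qh mu C (~:C)).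
  have hF := zle C h0 h1.
  have hbd : 0 <= (1 - beta) * del by apply: mulr_ge0 => //; lra.
  have := ler_wpM2l hbd hF.
  rewrite /del => *; nra.
have inb : forall C : {set S}, C != set0 -> C != setT ->
    cross qh mu (~:C) C <= (1 + beta + del) * cross q mu C (~:C).
  move=> C h0 h1.
  have hk : 0 <= eps * z by apply: ltW.
  have := @cross_bound _ _ (~:C) C (fun x y => mu x * qh x y)
     (fun x y => (1 + beta) * (mu x * q x y)) _ hk.
  have H : (forall x y, x \in ~:C -> y \in C ->
      mu x * qh x y <= (1 + beta) * (mu x * q x y) + eps * z).
    move=> x y _ _.
    case: (lerP (eps * z) (mu x * qh x y)) => hc.
    - have [_ h] := hclose x y. have [qpos hb] := h hc.
      set w := qh x y / q x y in hb.
      have hw : qh x y = w * q x y by rewrite /w divfK // gt_eqF.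
      move: hb; rewrite ler_norml => /andP [hb1 hb2].
      rewrite hw.
      have hwp : 0 <= (1 + beta) - w by lra.
      have := mulr_ge0 (mulr_ge0 (hmu0 x) (hq0 x y)) hwp.
      nra.
    - have := mulr_ge0 (hmu0 x) (hq0 x y).
      have : 0 <= 1 + beta by lra.
      nra.
  have e : \sum_(x in ~:C) \sum_(y in C) (1 + beta) * (mu x * q x y) = (1 + beta) * cross q mu C (~:C).
    rewrite (balance hq1 hmust C) /cross mulr_sumr; apply: eq_bigr => x _; rewrite mulr_sumr.
    done.
  move=> /(_ H); rewrite e.
  rewrite -[\sum_(x in ~:C) \sum_(y in C) mu x * qh x y]/(cross qh mu (~:C) C).
  have hF := zle C h0 h1.
  have := ler_wpM2l hdel0 hF.
  rewrite /del => *; nra.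
have cpos : 0 < (1 - beta) * (1 - del) by apply: mulr_gt0; lra.
split.
  move=> s t.
  case: (boolP (connect (fun x y => 0 < qh x y) s t)) => // hn.
  exfalso.
  set C := [set y | connect (fun x y => 0 < qh x y) s y].
  have h0 : C != set0 by apply/set0Pn; exists s; rewrite inE connect0.
  have h1 : C != setT.
    apply/eqP => hT; have : t \in C by rewrite hT inE.
    by rewrite inE (negbTE hn).
  have hpos : 0 < cross qh mu C (~:C).
    apply: lt_le_trans (outb C h0 h1); apply: mulr_gt0 => //; exact: Fpos.
  have [x hx hx'] := sum_pos_ex hpos.
  have [y hy hxy] := sum_pos_ex hx'.
  have qpos : 0 < qh x y.
    rewrite lt_def hqh0 andbT; apply/eqP => h0'; move: hxy; rewrite h0' mulr0 ltxx.
    done.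
  move: hy; rewrite in_setC inE; apply/negP/negPn.
  move: hx; rewrite inE => hx.
  apply: (connect_trans hx); exact: connect1.
move=> muh [hmuh0 [hmuh1 hmuhst]] s.
set r := fun x => muh x / mu x.
rewrite -/(r s).
have hr0 : forall x, 0 <= r x by move=> x; rewrite /r divr_ge0 // ltW.
have hmr : forall x, muh x = mu x * r x.
  by move=> x; rewrite /r mulrC divfK // gt_eqF.
set rho := 1 + 4 * beta.
have rho1 : 1 <= rho by rewrite /rho; lra.
have cut : forall (C : {set S}) a b, C != set0 -> C != setT -> 0 <= a -> 0 <= b ->
    (forall x, x \in C -> a <= r x) -> (forall y, y \notin C -> r y <= b) -> a <= rho * b.
  move=> C a b h0 h1 ha hb hCa hCb.
  have balh := balance hqh1 hmuhst C.
  have e1 : a * cross qh mu C (~:C) <= cross qh muh C (~:C).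
    rewrite /cross mulr_sumr; apply: ler_sum => x hx; rewrite mulr_sumr; apply: ler_sum => y _.
    rewrite hmr. have := hCa x hx. have := mulr_ge0 (hmu0 x) (hqh0 x y). nra.
  have e2 : cross qh muh (~:C) C <= b * cross qh mu (~:C) C.
    rewrite /cross mulr_sumr; apply: ler_sum => x hx; rewrite mulr_sumr; apply: ler_sum => y _.
    rewrite in_setC in hx.
    rewrite hmr. have := hCb x hx. have := mulr_ge0 (hmu0 x) (hqh0 x y). nra.
  have o := outb C h0 h1. have i := inb C h0 h1. have F := Fpos C h0 h1.
  have hd := numeric1 hbeta0 hb4 hdel0 hdel.
  move: o i F e1 e2 hd; rewrite balh.
  set Fv := cross q mu C (~:C).
  set Ho := cross qh mu C (~:C).
  set Hi := cross qh mu (~:C) C.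
  set Mo := cross qh muh (~:C) C.
  set c := (1 - beta) * (1 - del).
  set d := 1 + beta + del.
  move=> o i F e1 e2 hd.
  have h3 : a * (c * Fv) <= b * (d * Fv).
    apply: le_trans (ler_wpM2l ha o) _. apply: le_trans e1 _.
    apply: le_trans e2 _. have := ler_wpM2l hb i. done.
  move: h3; rewrite !mulrA ler_pM2r // => h3.
  have h4 : b * d <= b * ((1 + 4 * beta) * c) by have := ler_wpM2l hb hd.
  have h5 : a * c <= (rho * b) * c  by rewrite /rho /c in h4 *; lra.
  by move: h5; rewrite ler_pM2r.
have [x0 hx0] : exists x0, forall y, r y <= r x0.
  case: (@arg_maxP _ _ S s predT r isT) => x0 _ h; exists x0 => y; exact: h.
set M := r x0.
have M0 : 0 <= M by apply: hr0.
have step : forall k, (k < #|S|)%N ->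
    exists C : {set S}, #|C| = k.+1 /\ forall x, x \in C -> M <= r x * rho ^+ k.
  elim => [_|k IH hk].
    exists [set x0]; split; first by rewrite cards1.
    by move=> x /set1P ->; rewrite expr0 mulr1.
  have [C [hC hCM]] := IH (ltnW hk).
  have h0 : C != set0 by rewrite -card_gt0 hC.
  have h1 : C != setT.
    by apply/eqP => hT; move: hk; rewrite -hC hT cardsT ltnn.
  have : ~~ (setT \subset C) by rewrite subTset.
  case/subsetPn => t0 _ ht0.
  case: (@arg_maxP _ _ S t0 (fun y => y \notin C) r ht0) => t ht hmax.
  exists (t |: C); split; first by rewrite cardsU1 ht hC.
  have rk : 0 < rho ^+ k by rewrite exprn_gt0 //; lra.
  move=> x /setU1P [-> | hx].
  - have ha : 0 <= M / rho ^+ k by rewrite divr_ge0 // ltW.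
    have := cut C (M / rho ^+ k) (r t) h0 h1 ha (hr0 t).
    have hCa : forall x1, x1 \in C -> M / rho ^+ k <= r x1.
      by move=> x1 hx1; rewrite ler_pdivrMr //; exact: (hCM x1 hx1).
    move=> /(_ hCa hmax).
    rewrite ler_pdivrMr // exprS => h.
    by apply: le_trans h _; rewrite mulrA [r t * rho]mulrC.
  - have := hCM x hx.
    have := ler_wpM2r (mulr_ge0 (hr0 x) (ltW rk)) rho1.
    rewrite exprS; nra.
have hSp : (#|S|.-1 < #|S|)%N by rewrite prednK // ltnW.
have [C [hC hCM]] := step #|S|.-1 hSp.
have CT : C = setT.
  have hS0 : (0 < #|S|)%N by exact: ltnW hS.
  by apply/eqP; rewrite eqEcard subsetT cardsT hC prednK // leqnn.
set K := rho ^+ #|S|.-1 in hCM.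
have hK : forall y, M <= r y * K by move=> y; apply: hCM; rewrite CT inE.
have M1 : 1 <= M.
  have : \sum_x mu x * r x <= \sum_x mu x * M.
    by apply: ler_sum => x _; apply: ler_wpM2l => //; exact: hx0.
  under eq_bigr => x _ do rewrite -hmr.
  by rewrite hmuh1 -mulr_suml hmu1 mul1r.
have MK : M <= K.
  have : \sum_x mu x * M <= \sum_x mu x * (r x * K).
    by apply: ler_sum => x _; apply: ler_wpM2l => //; exact: hK.
  under [X in _ <= X -> _]eq_bigr => x _ do rewrite mulrA -hmr.
  by rewrite -!mulr_suml hmu1 hmuh1 !mul1r.
have rs : r s <= M := hx0 s.
have hKs := hK s.
have Kb : K - 1 <= 18 * beta * (Lconst S)%:R.
  have hx4 : 0 <= 4 * beta by lra.
  have := pow_bound #|S|.-1 hx4 hb4.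
  rewrite -/rho -/K => h.
  have h2 : 4 * beta * (#|S|.-1 * 2 ^ #|S|.-1)%:R <= 18 * beta * (Lconst S)%:R.
    have -> : 4 * beta * (#|S|.-1 * 2 ^ #|S|.-1)%:R = beta * (4 * (#|S|.-1 * 2 ^ #|S|.-1))%:R.
      by rewrite natrM; ring.
    have -> : 18 * beta * (Lconst S)%:R = beta * (18 * Lconst S)%:R.
      by rewrite natrM; ring.
    by apply: ler_wpM2l; [exact: ltW | rewrite ler_nat].
  lra.
have Kpos : 0 < K by lra.
rewrite ler_norml; apply/andP; split; first by lra.
case: (lerP (2 - K) (r s)) => h; first by lra.
exfalso.
have h1 : r s * K < (2 - K) * K by rewrite ltr_pM2r.
have := sqr_ge0 (K - 1).
nra.
Qed.
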